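(* Let $\lambda\in Y^{++}$ and let $(\mu_n)_{n\in\mathbb N}$ be a sequence in $W^v\lambda$ with $l(w_{\mu_n})\to+\infty$. Then $\mu_n-\lambda\in Q^\vee$ for all $n$ and $h(\mu_n-\lambda)\to-\infty$.
   Context: $I$ finite, $A$ a generalized Cartan matrix, $Y$ a free $\mathbb Z$-module of finite rank with free family $(\alpha_i^\vee)_{i\in I}$ and $\alpha_i\in\mathrm{Hom}(Y,\mathbb Z)$ with $\alpha_j(\alpha_i^\vee)=a_{i,j}$; $\mathbb A=Y\otimes\mathbb R$; $r_i(v)=v-\alpha_i(v)\alpha_i^\vee$; $W^v=\langle r_i\rangle$ with length $l$; $Q^\vee=\bigoplus\mathbb Z\alpha_i^\vee$; $C^v_f=\{\alpha_i>0\ \forall i\}$, $\mathcal T=\bigcup_w w\overline{C^v_f}$, $Y^+=Y\cap\mathcal T$, $Y^{++}=Y\cap\overline{C^v_f}$. For $x=\sum_i x_i\alpha_i^\vee\in Q^\vee$, $h(x)=\sum_i x_i$. For $\mu\in Y^+$, $w_\mu$ denotes the element $w\in W^v$ of minimal length such that $w^{-1}\mu\in\overline{C^v_f}$. *)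

(* Defs.v *)
From HB Require Import structures.
From mathcomp Require Import all_boot all_order all_algebra.
Set Implicit Arguments. Unset Strict Implicit. Unset Printing Implicit Defensive.
Import Order.TTheory GRing.Theory Num.Theory.
Local Open Scope ring_scope.

(* Y is modelled as 'rV[int]_r (free Z-module of rank r);
   a form alpha in Hom(Y,Z) is a column vector, evaluated by ev. *)
Definition ev (r : nat) (a : 'cV[int]_r) (y : 'rV[int]_r) : int := (y *m a) 0 0.

Definition cartan (I : finType) (r : nat) (alpha : I -> 'cV[int]_r)
  (alphav : I -> 'rV[int]_r) (i j : I) : int := ev (alpha j) (alphav i).

Definition is_gcm (I : finType) (A : I -> I -> int) : Prop :=
  [/\ forall i, A i i = 2,
      forall i j, i != j -> A i j <= 0
    & forall i j, A i j = 0 <-> A j i = 0].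

Definition free_family (I : finType) (r : nat) (alphav : I -> 'rV[int]_r) : Prop :=
  forall c : I -> int, \sum_(i : I) c i *: alphav i = 0 -> forall i, c i = 0.

Definition refl (I : finType) (r : nat) (alpha : I -> 'cV[int]_r)
  (alphav : I -> 'rV[int]_r) (i : I) (y : 'rV[int]_r) : 'rV[int]_r :=
  y - ev (alpha i) y *: alphav i.

(* the element r_{i1} ... r_{ik} of W^v represented by the word [:: i1; ...; ik] *)
Definition act (I : finType) (r : nat) (alpha : I -> 'cV[int]_r)
  (alphav : I -> 'rV[int]_r) (w : seq I) (y : 'rV[int]_r) : 'rV[int]_r :=
  foldr (fun i z => refl alpha alphav i z) y w.

(* two words define the same element of W^v (equality of linear maps,
   tested on the standard basis of Y, which spans A = Y (x) R) *)
Definition sameW (I : finType) (r : nat) (alpha : I -> 'cV[int]_r)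
  (alphav : I -> 'rV[int]_r) (w1 w2 : seq I) : bool :=
  [forall k : 'I_r, act alpha alphav w1 (delta_mx 0 k)
                    == act alpha alphav w2 (delta_mx 0 k)].

Lemma lenW_ex (I : finType) (r : nat) (alpha : I -> 'cV[int]_r)
  (alphav : I -> 'rV[int]_r) (w : seq I) :
  exists n, [exists t : n.-tuple I, sameW alpha alphav t w].
Proof.
exists (size w); apply/existsP; exists (in_tuple w).
by apply/forallP => k; rewrite /=.
Qed.

Definition lenW (I : finType) (r : nat) (alpha : I -> 'cV[int]_r)
  (alphav : I -> 'rV[int]_r) (w : seq I) : nat :=
  ex_minn (lenW_ex alpha alphav w).

Definition dominant (I : finType) (r : nat) (alpha : I -> 'cV[int]_r)
  (y : 'rV[int]_r) : bool := [forall i : I, 0 <= ev (alpha i) y].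

(* w (a word) represents w_mu: w^{-1} mu in closure(C^v_f) and w has minimal
   length among such elements. (The inverse of r_{i1}...r_{ik} is the reversed word.) *)
Definition is_w_mu (I : finType) (r : nat) (alpha : I -> 'cV[int]_r)
  (alphav : I -> 'rV[int]_r) (mu : 'rV[int]_r) (w : seq I) : Prop :=
  dominant alpha (act alpha alphav (rev w) mu) /\
  forall w' : seq I, dominant alpha (act alpha alphav (rev w') mu) ->
    (lenW alpha alphav w <= lenW alpha alphav w')%N.

Definition coroot_coords (I : finType) (r : nat) (alphav : I -> 'rV[int]_r)
  (x : 'rV[int]_r) (c : I -> int) : Prop :=
  x = \sum_(i : I) c i *: alphav i.

(* Main.v *)
Require Import Defs.
From HB Require Import structures.
From mathcomp Require Import all_boot all_order all_algebra.
From mathcomp Require Import ring lra zify.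
Set Implicit Arguments. Unset Strict Implicit. Unset Printing Implicit Defensive.
Import Order.TTheory GRing.Theory Num.Theory.
Local Open Scope ring_scope.

Section KM.
Variables (I : finType) (r : nat) (alpha : I -> 'cV[int]_r) (alphav : I -> 'rV[int]_r).

Lemma evD (a : 'cV[int]_r) x y : ev a (x + y) = ev a x + ev a y.
Proof. by rewrite /ev mulmxDl mxE. Qed.
Lemma evZ (a : 'cV[int]_r) c x : ev a (c *: x) = c * ev a x.
Proof. by rewrite /ev -scalemxAl mxE. Qed.
Lemma evN (a : 'cV[int]_r) x : ev a (- x) = - ev a x.
Proof. by rewrite /ev mulNmx mxE. Qed.
Lemma evB (a : 'cV[int]_r) x y : ev a (x - y) = ev a x - ev a y.
Proof. by rewrite evD evN. Qed.
Lemma ev0 (a : 'cV[int]_r) : ev a 0 = 0.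
Proof. by rewrite /ev mul0mx mxE. Qed.

Definition Rm i : 'M[int]_r := 1%:M - alpha i *m alphav i.
Lemma refl_mx i y : refl alpha alphav i y = y *m Rm i.
Proof.
by rewrite /refl /Rm mulmxBr mulmx1 mulmxA [y *m alpha i]mx11_scalar mul_scalar_mx.
Qed.

Definition actM (w : seq I) : 'M[int]_r := foldr (fun i M => M *m Rm i) 1%:M w.
Lemma act_mx w y : act alpha alphav w y = y *m actM w.
Proof.
elim: w => [|i w IH] /=; first by rewrite mulmx1.
by rewrite refl_mx IH mulmxA.
Qed.

Lemma sameW_mx w1 w2 : sameW alpha alphav w1 w2 = (actM w1 == actM w2).
Proof.
apply/forallP/eqP => [H|E k]; last by rewrite !act_mx E.
apply/row_matrixP => k; rewrite !rowE -!act_mx; exact/eqP/H.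
Qed.

Lemma act_cat a b y : act alpha alphav (a ++ b) y = act alpha alphav a (act alpha alphav b y).
Proof. by rewrite /act foldr_cat. Qed.

Lemma actD w x y : act alpha alphav w (x + y) = act alpha alphav w x + act alpha alphav w y.
Proof. by rewrite !act_mx mulmxDl. Qed.
Lemma actZ w c x : act alpha alphav w (c *: x) = c *: act alpha alphav w x.
Proof. by rewrite !act_mx scalemxAl. Qed.
Lemma actN w x : act alpha alphav w (- x) = - act alpha alphav w x.
Proof. by rewrite !act_mx mulNmx. Qed.
Lemma actB w x y : act alpha alphav w (x - y) = act alpha alphav w x - act alpha alphav w y.
Proof. by rewrite actD actN. Qed.

Lemma detsylv (a : 'cV[int]_r) (b : 'rV[int]_r) :
  \det (1%:M - a *m b) = 1 - (b *m a) 0 0.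
Proof.
pose M := block_mx (1%:M : 'M_r) a b (1%:M : 'M_1).
pose L := block_mx (1%:M : 'M_r) (- a) 0 (1%:M : 'M_1).
have h1 : L *m M = block_mx (1%:M - a *m b) 0 b 1%:M.
  rewrite mulmx_block !mul1mx !mul0mx !add0r mulmx1 mulNmx.
  by rewrite subrr.
have h2 : M *m L = block_mx 1%:M 0 b (1%:M - b *m a).
  rewrite mulmx_block !mulmx1 !mulmx0 !addr0 mul1mx mulmxN.
  by rewrite addNr addrC.
have dL : \det L = 1 by rewrite det_ublock !det1 mulr1.
have := congr1 determinant h1; rewrite det_mulmx dL mul1r det_lblock det1 mulr1 => <-.
have := congr1 determinant h2; rewrite det_mulmx dL mulr1 det_lblock det1 mul1r => ->.
by rewrite det_mx11 !mxE.
Qed.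

Lemma actM_cat x y : actM (x ++ y) = actM y *m actM x.
Proof. elim: x => [|i x IH] /=; first by rewrite mulmx1. by rewrite IH mulmxA. Qed.

Hypothesis hgcm : is_gcm (cartan alpha alphav).
Hypothesis hfree : free_family alphav.

Lemma cii i : ev (alpha i) (alphav i) = 2.
Proof. by case: hgcm => h _ _; have := h i. Qed.

Lemma refl_invol i y : refl alpha alphav i (refl alpha alphav i y) = y.
Proof.
rewrite {1}/refl evB evZ cii /refl.
set X := ev (alpha i) y.
rewrite -addrA -scaleNr -scalerBl.
have -> : (- X - (X - X * 2)) = 0 by ring.
by rewrite scale0r addr0.
Qed.

Lemma act_rev w y : act alpha alphav (rev w) (act alpha alphav w y) = y.
Proof.
elim: w y => [|i w IH] y //=.
by rewrite rev_cons -cats1 act_cat /= refl_invol IH.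
Qed.

Lemma act_rev' w y : act alpha alphav w (act alpha alphav (rev w) y) = y.
Proof. by rewrite -{1}(revK w) act_rev. Qed.

Lemma det_Rm i : \det (Rm i) = -1.
Proof. by rewrite /Rm detsylv -/(ev (alpha i) (alphav i)) cii. Qed.

Lemma det_actM w : \det (actM w) = (-1) ^+ size w.
Proof.
elim: w => [|i w IH] /=; first by rewrite det1.
by rewrite det_mulmx IH det_Rm exprS mulrC.
Qed.

Definition lenW' w := lenW alpha alphav w.

Lemma lenW_spec w : exists t : seq I, size t = lenW' w /\ actM t = actM w.
Proof.
rewrite /lenW' /lenW; case: ex_minnP => m /existsP [t ht] _.
by exists t; split; [rewrite size_tuple | apply/eqP; rewrite -sameW_mx].
Qed.

Lemma lenW_min w t : actM t = actM w -> (lenW' w <= size t)%N.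
Proof.
move=> e; rewrite /lenW' /lenW; case: ex_minnP => m _; apply.
by apply/existsP; exists (in_tuple t); rewrite sameW_mx /= e.
Qed.

Lemma lenW_size w : (lenW' w <= size w)%N.
Proof. exact: lenW_min. Qed.

Lemma lenW_eq w1 w2 : actM w1 = actM w2 -> lenW' w1 = lenW' w2.
Proof.
move=> e; apply/eqP; rewrite eqn_leq.
have [t1 [s1 e1]] := lenW_spec w1; have [t2 [s2 e2]] := lenW_spec w2.
apply/andP; split.
  by rewrite -s2 lenW_min // e2.
by rewrite -s1 lenW_min // e1.
Qed.

Lemma lenW_cat a b : (lenW' (a ++ b) <= lenW' a + lenW' b)%N.
Proof.
have [t1 [s1 e1]] := lenW_spec a; have [t2 [s2 e2]] := lenW_spec b.
by rewrite -s1 -s2 -size_cat lenW_min // !actM_cat e1 e2.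
Qed.

Lemma lenW_parity w : odd (lenW' w) = odd (size w).
Proof.
have [t [s e]] := lenW_spec w.
have := congr1 determinant e; rewrite !det_actM s.
rewrite -(signr_odd _ (size w)) -(signr_odd _ (lenW' w)).
exact: (@signr_inj int).
Qed.

Lemma lenW_parity_ne w i : lenW' (w ++ [:: i]) != lenW' w.
Proof.
apply/eqP => h; have := lenW_parity (w ++ [:: i]); rewrite h lenW_parity.
by rewrite size_cat /= addn1 /=; case: (odd _).
Qed.

Lemma lenW_app1 w i : (lenW' (w ++ [:: i]) <= (lenW' w).+1)%N.
Proof.
apply: leq_trans (lenW_cat _ _) _; rewrite -addn1 leq_add2l.
exact: (lenW_size [:: i]).
Qed.

Lemma actM_cancel w i : actM (w ++ [:: i; i]) = actM w.
Proof.
apply/row_matrixP => k; rewrite !rowE -!act_mx act_cat /= refl_invol //.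
Qed.

Lemma lenW_app1' w i : (lenW' w <= (lenW' (w ++ [:: i])).+1)%N.
Proof.
rewrite -(lenW_eq (actM_cancel w i)) -(cat1s i [:: i]) catA; exact: lenW_app1.
Qed.


Definition pos (x : 'rV[int]_r) :=
  exists c : I -> int, (forall i, 0 <= c i) /\ x = \sum_i c i *: alphav i.

Lemma pos0 : pos 0.
Proof. by exists (fun=> 0); split => // ; rewrite big1 // => i _; rewrite scale0r. Qed.

Lemma posD x y : pos x -> pos y -> pos (x + y).
Proof.
move=> [c [hc ->]] [d [hd ->]]; exists (fun i => c i + d i); split.
  by move=> i; rewrite addr_ge0.
by rewrite -big_split /=; apply: eq_bigr => i _; rewrite scalerDl.
Qed.

Lemma posZ a x : 0 <= a -> pos x -> pos (a *: x).
Proof.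
move=> ha [c [hc ->]]; exists (fun i => a * c i); split.
  by move=> i; rewrite mulr_ge0.
by rewrite scaler_sumr; apply: eq_bigr => i _; rewrite scalerA.
Qed.

Lemma pos_av i : pos (alphav i).
Proof.
exists (fun j => (j == i)%:R); split; first by move=> j; case: (j == i).
rewrite (bigD1 i) //= eqxx scale1r big1 ?addr0 // => j /negbTE ->.
by rewrite scale0r.
Qed.

Fixpoint altE (b : bool) (n : nat) : seq bool :=
  if n is n'.+1 then rcons (altE (~~ b) n') b else [::].

Lemma size_altE b n : size (altE b n) = n.
Proof. by elim: n b => [|n IH] b //=; rewrite size_rcons IH. Qed.

Lemma altE_split b a c : altE b (a + c) = altE (b (+) odd c) a ++ altE b c.
Proof.
elim: c b => [|c IH] b; first by rewrite addn0 addbF cats0.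
rewrite addnS /= IH rcons_cat; congr (altE _ _ ++ _).
by case: b; case: (odd c).
Qed.

Section Rank2.
Variables (s s' : I).
Hypothesis hss : s != s'.
Definition fb (b : bool) := if b then s else s'.
Let P := ev (alpha s) (alphav s').
Let Q := ev (alpha s') (alphav s).

Definition stepS (X Z : int) (b : bool) (cd : int * int) : int * int :=
  if b then (- cd.1 - X - cd.2 * P, cd.2) else (cd.1, - cd.2 - Z - cd.1 * Q).

Lemma act_state w y c d :
  act alpha alphav (map fb w) (y + c *: alphav s + d *: alphav s') =
  y + (foldr (stepS (ev (alpha s) y) (ev (alpha s') y)) (c, d) w).1 *: alphav s
    + (foldr (stepS (ev (alpha s) y) (ev (alpha s') y)) (c, d) w).2 *: alphav s'.
Proof.
elim: w => [|b w IH] //=; rewrite IH.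
set c1 := (foldr _ _ w).1; set d1 := (foldr _ _ w).2.
case: b => /=; rewrite /refl !evD !evZ ?cii -/P -/Q.
  rewrite -/c1 -/d1.
  have -> : (- c1 - ev (alpha s) y - d1 * P) = c1 - (ev (alpha s) y + c1 * 2 + d1 * P) by ring.
  by rewrite scalerBl addrAC -[y + _ - _]addrA.
rewrite -/c1 -/d1.
have -> : (- d1 - ev (alpha s') y - c1 * Q) = d1 - (ev (alpha s') y + c1 * Q + d1 * 2) by ring.
by rewrite scalerBl -addrA.
Qed.


Lemma rel_of_state w1 w2 :
  (forall X Z, foldr (stepS X Z) (0, 0) w1 = foldr (stepS X Z) (0, 0) w2) ->
  actM (map fb w1) = actM (map fb w2).
Proof.
move=> H; apply/row_matrixP => k; rewrite !rowE -!act_mx.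
set y := delta_mx 0 k.
have e w : act alpha alphav (map fb w) y = act alpha alphav (map fb w) (y + 0 *: alphav s + 0 *: alphav s').
  by rewrite !scale0r !addr0.
by rewrite !e !act_state H.
Qed.

Lemma act_pos_state w :
  act alpha alphav (map fb w) (alphav s) =
  (foldr (stepS 0 0) (1, 0) w).1 *: alphav s + (foldr (stepS 0 0) (1, 0) w).2 *: alphav s'.
Proof.
have e : alphav s = 0 + 1 *: alphav s + 0 *: alphav s' by rewrite scale1r scale0r add0r addr0.
by rewrite [in LHS]e act_state !ev0 add0r.
Qed.

Lemma PQ_facts : [/\ P <= 0, Q <= 0 & (P == 0) = (Q == 0)].
Proof.
case: hgcm => _ h1 h2.
have hP : P = cartan alpha alphav s' s by [].
have hQ : Q = cartan alpha alphav s s' by [].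
split; first by rewrite hP h1 // eq_sym.
  by rewrite hQ h1.
rewrite hP hQ; apply/eqP/eqP => /h2 //.
Qed.

Lemma nonred m k :
  actM (map fb (altE true m.+1)) = actM (map fb (altE false m.-1)) ->
  (0 < m)%N -> (m <= k)%N -> (lenW' (map fb (altE true k.+1)) < k.+1)%N.
Proof.
move=> hrel hm hk.
have -> : k.+1 = ((k - m) + m.+1)%N by rewrite addnS subnK.
rewrite altE_split map_cat.
set A := altE _ (k - m).
have e : actM (map fb A ++ map fb (altE true m.+1)) = actM (map fb A ++ map fb (altE false m.-1)).
  by rewrite !actM_cat hrel.
rewrite (lenW_eq e); apply: leq_ltn_trans (lenW_size _) _.
rewrite size_cat !size_map !size_altE addnS ltnS leq_add2l.
by case: m {hrel hk e A} hm.
Qed.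

Lemma inf_case : 4 <= P * Q -> forall k,
  let st := foldr (stepS 0 0) (1, 0) (altE false k) in
  [/\ 0 <= st.1, 0 <= st.2, (odd k -> 2 * st.1 <= - P * st.2)
    & (~~ odd k -> 2 * st.2 <= - Q * st.1)].
Proof.
case: PQ_facts => hP hQ _ h4.
elim => [|k IH]; first by split => //=; rewrite mulr0 mulr1 oppr_ge0.
have -> : altE false k.+1 = altE (false (+) odd k) 1 ++ altE false k by rewrite -altE_split add1n.
rewrite foldr_cat /=.
move: IH => /=; case: (foldr (stepS 0 0) (1, 0) (altE false k)) => c d /=.
rewrite /stepS; case: (odd k) => /= [[hc hd h1 _]|[hc hd _ h1]].
  have {}h1 := h1 isT.
  split=> //; nia.
have {}h1 := h1 isT.
split=> //; nia.
Qed.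

Lemma R2 k : lenW' (map fb (altE true k.+1)) = k.+1 ->
  exists a b : int, [/\ 0 <= a, 0 <= b &
    act alpha alphav (map fb (altE false k)) (alphav s) = a *: alphav s + b *: alphav s'].
Proof.
move=> hred; rewrite act_pos_state.
suff : 0 <= (foldr (stepS 0 0) (1, 0) (altE false k)).1 /\ 0 <= (foldr (stepS 0 0) (1, 0) (altE false k)).2.
  by case=> h1 h2; eexists; eexists; split; [exact: h1|exact: h2|].
case: PQ_facts => hP hQ hPQ.
have hPQ' : (P = 0 -> Q = 0) /\ (Q = 0 -> P = 0).
  by split=> h; apply/eqP; [rewrite -hPQ h | rewrite hPQ h].
have : 4 <= P * Q \/ (P = 0 /\ Q = 0) \/ (P = -1 /\ Q = -1) \/ (P = -1 /\ Q = -2)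
  \/ (P = -2 /\ Q = -1) \/ (P = -1 /\ Q = -3) \/ (P = -3 /\ Q = -1).
  case: hPQ' => h1 h2; nia.
have contra m (hrel : actM (map fb (altE true m.+1)) = actM (map fb (altE false m.-1)))
   (hm : (0 < m)%N) : (k < m)%N.
  rewrite ltnNge; apply/negP => hk; have := nonred hrel hm hk.
  by rewrite hred ltnn.
case=> [h4|[[e1 e2]|[[e1 e2]|[[e1 e2]|[[e1 e2]|[[e1 e2]|[e1 e2]]]]]]].
- by case: (inf_case h4 k).
- have hrel : actM (map fb (altE true 3)) = actM (map fb (altE false 1)).
    by apply: rel_of_state => X Z /=; rewrite /stepS /= e1 e2; congr pair; ring.
  have hk := contra 2 hrel isT.
  by case: k hk {hred contra hrel} => [|[|]] //= _; rewrite /stepS /= ?e1 ?e2.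
- have hrel : actM (map fb (altE true 4)) = actM (map fb (altE false 2)).
    by apply: rel_of_state => X Z /=; rewrite /stepS /= e1 e2; congr pair; ring.
  have hk := contra 3 hrel isT.
  by case: k hk {hred contra hrel} => [|[|[|]]] //= _; rewrite /stepS /= ?e1 ?e2.
- have hrel : actM (map fb (altE true 5)) = actM (map fb (altE false 3)).
    by apply: rel_of_state => X Z /=; rewrite /stepS /= e1 e2; congr pair; ring.
  have hk := contra 4 hrel isT.
  by case: k hk {hred contra hrel} => [|[|[|[|]]]] //= _; rewrite /stepS /= ?e1 ?e2.
- have hrel : actM (map fb (altE true 5)) = actM (map fb (altE false 3)).
    by apply: rel_of_state => X Z /=; rewrite /stepS /= e1 e2; congr pair; ring.
  have hk := contra 4 hrel isT.
  by case: k hk {hred contra hrel} => [|[|[|[|]]]] //= _; rewrite /stepS /= ?e1 ?e2.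
- have hrel : actM (map fb (altE true 7)) = actM (map fb (altE false 5)).
    by apply: rel_of_state => X Z /=; rewrite /stepS /= e1 e2; congr pair; ring.
  have hk := contra 6 hrel isT.
  by case: k hk {hred contra hrel} => [|[|[|[|[|[|]]]]]] //= _; rewrite /stepS /= ?e1 ?e2.
- have hrel : actM (map fb (altE true 7)) = actM (map fb (altE false 5)).
    by apply: rel_of_state => X Z /=; rewrite /stepS /= e1 e2; congr pair; ring.
  have hk := contra 6 hrel isT.
  by case: k hk {hred contra hrel} => [|[|[|[|[|[|]]]]]] //= _; rewrite /stepS /= ?e1 ?e2.
Qed.

Lemma red_alt x b : lenW' (map fb (rcons x b)) = (size x).+1 ->
  rcons x b = altE b (size x).+1.
Proof.
elim/last_ind: x b => [|x a IH] b //= h.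
rewrite size_rcons in h *.
have hab : a = ~~ b.
  case: (a =P b) => [eab|nab]; last by move: nab; clear; case: a; case: b.
  exfalso; move: h; rewrite eab !map_rcons -!cats1 -catA /=.
  have e : actM (map fb x ++ [:: fb b; fb b]) = actM (map fb x) by exact: actM_cancel.
  rewrite (lenW_eq e) => h; have := lenW_size (map fb x); rewrite h size_map.
  by rewrite ltnNge leqnSn.
have h2 : lenW' (map fb (rcons x a)) = (size x).+1.
  apply/eqP; rewrite eqn_leq; apply/andP; split.
    by have := lenW_size (map fb (rcons x a)); rewrite size_map size_rcons.
  have := lenW_app1 (map fb (rcons x a)) (fb b).
  by rewrite cats1 -map_rcons h ltnS.
by rewrite (IH a h2) hab /=.
Qed.

End Rank2.
Lemma act_eqM w1 w2 y : actM w1 = actM w2 -> act alpha alphav w1 y = act alpha alphav w2 y.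
Proof. by move=> e; rewrite !act_mx e. Qed.

Lemma len0 w : lenW' w = 0%N -> actM w = 1%:M.
Proof.
move=> h; have [t [st et]] := lenW_spec w; rewrite -et.
by move: st {et}; rewrite h; case: t.
Qed.

Lemma lenW_step w i : lenW' (w ++ [:: i]) = (lenW' w).+1 \/ (lenW' (w ++ [:: i])).+1 = lenW' w.
Proof.
have := lenW_app1 w i; have := lenW_app1' w i; have := lenW_parity_ne w i.
move/eqP; lia.
Qed.

Lemma actM_catA a b c : actM (a ++ b ++ c) = actM ((a ++ b) ++ c).
Proof. by rewrite catA. Qed.

Lemma posT n : forall w s, (lenW' w <= n)%N -> lenW' (w ++ [:: s]) = (lenW' w).+1 ->
  pos (act alpha alphav w (alphav s)).
Proof.
have base w s : lenW' w = 0%N -> pos (act alpha alphav w (alphav s)).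
  by move=> h; rewrite act_mx (len0 h) mulmx1; exact: pos_av.
elim: n => [|n IHn] w s hw hs; first by apply: base; lia.
case hN : (lenW' w) => [|N]; first exact: base.
have [t [st et]] := lenW_spec w.
move: st et; case/lastP: t => [|t' s'] st et; first by rewrite hN in st.
rewrite size_rcons hN in st; case: st => st.
have ht' : lenW' t' = N.
  have := lenW_size t'; have := lenW_app1 t' s'.
  rewrite cats1 (lenW_eq et) hN st; lia.
have hws' : lenW' (w ++ [:: s']) = N.
  rewrite -ht'; apply: lenW_eq.
  by rewrite actM_cat -et -cats1 -actM_cat -catA actM_cancel.
have hss : s != s'.
  apply/eqP => e; move: hs; rewrite e hws' hN; lia.
suff inner : forall k v u, (lenW' v <= k)%N ->
    actM (v ++ map (fb s s') u) = actM w -> (lenW' v + size u)%N = N.+1 ->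
    pos (act alpha alphav w (alphav s)).
  apply: (inner _ t' [:: false] (leqnn _)); last by rewrite ht' addn1.
  by rewrite /= -et cats1.
have down : forall v u b, actM (v ++ map (fb s s') u) = actM w ->
    (lenW' v + size u)%N = N.+1 -> (lenW' (v ++ [:: fb s s' b])).+1 = lenW' v ->
    exists v', [/\ (lenW' v').+1 = lenW' v,
      actM (v' ++ map (fb s s') (b :: u)) = actM w & (lenW' v' + size (b :: u))%N = N.+1].
  move=> v u b hvu hsz hd.
  have [t [stt ett]] := lenW_spec (v ++ [:: fb s s' b]).
  have htl : lenW' t = lenW' (v ++ [:: fb s s' b]) by apply: lenW_eq.
  exists t; split.
  - by rewrite htl.
  - have e1 : actM (t ++ [:: fb s s' b]) = actM v.
      by rewrite actM_cat ett -actM_cat -catA actM_cancel.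
    by rewrite /= -cat1s catA actM_cat e1 -actM_cat.
  - rewrite /= addnS htl; lia.
have caseC : forall v u, actM (v ++ map (fb s s') u) = actM w ->
    (lenW' v + size u)%N = N.+1 -> lenW' (v ++ [:: s]) = (lenW' v).+1 ->
    lenW' (v ++ [:: s']) = (lenW' v).+1 -> pos (act alpha alphav w (alphav s)).
  move=> v u hvu hsz hA hB.
  have hu : u != [::].
    apply/eqP => eu; move: hvu hsz; rewrite eu cats0 addn0 => hvu hsz.
    have : lenW' (v ++ [:: s']) = lenW' (w ++ [:: s']).
      by apply: lenW_eq; rewrite !actM_cat hvu.
    rewrite hws' hB hsz; lia.
  have hvn : (lenW' v <= n)%N.
    have : (0 < size u)%N by rewrite lt0n size_eq0.
    by move: hsz hw; rewrite hN; lia.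
  have p1 := IHn v s hvn hA.
  have p2 := IHn v s' hvn hB.
  have hred : lenW' (map (fb s s') (rcons u true)) = (size u).+1.
    have e : actM (w ++ [:: s]) = actM (v ++ map (fb s s') (rcons u true)).
      by rewrite map_rcons -cats1 catA [in RHS]actM_cat hvu -actM_cat.
    have := lenW_cat v (map (fb s s') (rcons u true)).
    rewrite -(lenW_eq e) hs hN.
    have := lenW_size (map (fb s s') (rcons u true)); rewrite size_map size_rcons.
    lia.
  have := red_alt hred; rewrite /= => /rcons_inj [eu].
  have hred' : lenW' (map (fb s s') (altE true (size u).+1)) = (size u).+1.
    by rewrite /= -eu.
  have [a [b [ha hb hab]]] := R2 hss hred'.
  rewrite -(act_eqM _ hvu) act_cat eu hab actD !actZ.
  by apply: posD; apply: posZ.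
elim=> [|k IHk] v u hv hvu hsz.
  have [hA|hA] := lenW_step v s; last by exfalso; lia.
  have [hB|hB] := lenW_step v s'; last by exfalso; lia.
  exact: caseC hvu hsz hA hB.
have [hA|hA] := lenW_step v s; last first.
  have [v' [h1 h2 h3]] := down v u true hvu hsz hA.
  apply: (IHk v' (true :: u)) => //; lia.
have [hB|hB] := lenW_step v s'; last first.
  have [v' [h1 h2 h3]] := down v u false hvu hsz hB.
  apply: (IHk v' (false :: u)) => //; lia.
exact: caseC hvu hsz hA hB.
Qed.

Lemma reduced_prefix t i : lenW' (rcons t i) = (size t).+1 -> lenW' t = size t.
Proof.
move=> h; apply/eqP; rewrite eqn_leq lenW_size /=.
by have := lenW_app1 t i; rewrite cats1 h ltnS.
Qed.

Lemma orbit_pos lam w : dominant alpha lam -> pos (lam - act alpha alphav w lam).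
Proof.
move=> hlam.
have [t [st et]] := lenW_spec w.
rewrite -(act_eqM _ et).
suff H : forall t, lenW' t = size t -> pos (lam - act alpha alphav t lam) by apply: H; rewrite st; apply: lenW_eq.
elim/last_ind => [|t' i IH] ht.
  by rewrite /= subrr; exact: pos0.
rewrite size_rcons in ht.
have ht' := reduced_prefix ht.
rewrite -cats1 act_cat /= /refl actB actZ opprB addrCA addrC.
apply: posD; first exact: IH ht'.
apply: posZ; first by move/forallP: hlam; apply.
apply: (posT (leqnn _)).
by rewrite cats1 ht ht'.
Qed.

Lemma coords_uniq x c d : x = \sum_i c i *: alphav i -> x = \sum_i d i *: alphav i -> forall i, c i = d i.
Proof.
move=> -> e i.
have := hfree (c := fun i => c i - d i); move=> /(_ _ i) h; apply/eqP; rewrite -subr_eq0; apply/eqP/h.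
by rewrite (eq_bigr (fun i => c i *: alphav i - d i *: alphav i)) ?sumrB ?e ?subrr // => j _; rewrite scalerBl.
Qed.

Lemma coords_nonneg lam w d : dominant alpha lam ->
  lam - act alpha alphav w lam = \sum_i d i *: alphav i -> forall i, 0 <= d i.
Proof.
move=> hlam e i; have [c [hc ec]] := orbit_pos w hlam.
by rewrite -(coords_uniq ec e).
Qed.

Lemma greedy lam (hlam : dominant alpha lam) K : forall w d,
  lam - act alpha alphav w lam = \sum_i d i *: alphav i -> \sum_i d i <= K%:Z ->
  exists w', dominant alpha (act alpha alphav (rev w') (act alpha alphav w lam))
     /\ (size w')%:Z <= \sum_i d i.
Proof.
have sum_ge0 w d : lam - act alpha alphav w lam = \sum_i d i *: alphav i -> 0 <= \sum_i d i.
  by move=> e; apply: sumr_ge0 => i _; exact: coords_nonneg e i.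
elim: K => [|K IH] w d e hK.
all: case hdom : (dominant alpha (act alpha alphav w lam)).
1,3: by exists [::]; split => //; exact: sum_ge0 e.
all: move/negbT: hdom; rewrite /dominant negb_forall => /existsP [i]; rewrite -ltNge => hi.
all: set mu := act alpha alphav w lam in e hi *.
all: pose d' := fun j => d j + (j == i)%:R * ev (alpha i) mu.
all: have e' : lam - act alpha alphav (i :: w) lam = \sum_j d' j *: alphav j.
1,3: rewrite /= -/mu /refl opprB addrCA addrC e /d'; under eq_bigr do rewrite scalerDl.
1,2: rewrite big_split /=; congr (_ + _); rewrite (bigD1 i) //= eqxx mul1r big1 ?addr0 // => j /negbTE ->.
1,2: by rewrite mul0r scale0r.
all: have hs : \sum_j d' j = \sum_j d j + ev (alpha i) mu.
1,3: rewrite /d' big_split /=; congr (_ + _); rewrite (bigD1 i) //= eqxx mul1r big1 ?addr0 // => j /negbTE ->.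
1,2: by rewrite mul0r.
all: have := sum_ge0 _ _ e'; rewrite hs => hge.
  exfalso; move: hK; rewrite -/mu; lia.
have hK' : \sum_j d' j <= K%:Z by move: hK; rewrite hs; lia.
have [w' [hw1 hw2]] := IH _ _ e' hK'.
exists (i :: w'); split.
  by rewrite rev_cons -cats1 act_cat.
by move: hw2; rewrite hs /=; lia.
Qed.

Lemma wmu_exists mu w0 : dominant alpha (act alpha alphav (rev w0) mu) ->
  exists w, is_w_mu alpha alphav mu w /\ (lenW' w <= size w0)%N.
Proof.
move=> h0.
have exP : exists n, [exists t : n.-tuple I, dominant alpha (act alpha alphav (rev t) mu)].
  by exists (size w0); apply/existsP; exists (in_tuple w0).
case: (ex_minnP exP) => m /existsP [t ht] hmin.
exists t; split; last first.
  apply: leq_trans (lenW_size _) _; rewrite size_tuple; apply: hmin.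
  by apply/existsP; exists (in_tuple w0).
split => // w' hw'.
apply: leq_trans (lenW_size _) _; rewrite size_tuple.
have [t' [st' et']] := lenW_spec w'.
change (m <= lenW' w')%N; rewrite -st'; apply: hmin; apply/existsP; exists (in_tuple t') => /=.
have -> : act alpha alphav (rev t') mu = act alpha alphav (rev w') mu.
  rewrite -{1}(act_rev' w' mu) (act_eqM _ (esym et')).
  by rewrite act_rev.
exact: hw'.
Qed.

End KM.

Unset Implicit Arguments.
Set Strict Implicit.

Theorem mainTheorem9 (I : finType) (r : nat)
  (alpha : I -> 'cV[int]_r) (alphav : I -> 'rV[int]_r)
  (hgcm : is_gcm (cartan alpha alphav))
  (hfree : free_family alphav)
  (lambda : 'rV[int]_r) (hlam : dominant alpha lambda)
  (mu : nat -> 'rV[int]_r)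
  (hmu : forall n, exists w : seq I, mu n = act alpha alphav w lambda)
  (hlen : forall M : nat, exists N : nat, forall n : nat, (N <= n)%N ->
            forall w : seq I, is_w_mu alpha alphav (mu n) w ->
              (M <= lenW alpha alphav w)%N) :
  (forall n, exists c : I -> int, coroot_coords alphav (mu n - lambda) c) /\
  (forall M : int, exists N : nat, forall n : nat, (N <= n)%N ->
     forall c : I -> int, coroot_coords alphav (mu n - lambda) c ->
       \sum_(i : I) c i <= M).
Proof.
split.
  move=> n; have [w ->] := hmu n.
  have [c [_ ec]] := orbit_pos hgcm w hlam.
  exists (fun i => - c i); rewrite /coroot_coords.
  rewrite -opprB ec -sumrN; apply: eq_bigr => i _; by rewrite scaleNr.
move=> M; have [N hN] := hlen (absz M).
exists N => n hn c hc.
have [w ew] := hmu n.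
pose d := fun i => - c i.
have ed : lambda - act alpha alphav w lambda = \sum_i d i *: alphav i.
  rewrite -ew -opprB hc -sumrN; apply: eq_bigr => i _; by rewrite scaleNr.
have hle : \sum_i d i <= (absz (\sum_i d i))%:Z by rewrite abszE ler_norm.
have [w0 [h1 h2]] := greedy hgcm hfree hlam ed hle.
rewrite -ew in h1.
have [w1 [hw1 hl1]] := wmu_exists hgcm h1.
have := hN n hn w1 hw1 => hK.
have hsd : \sum_i d i = - \sum_i c i by rewrite /d sumrN.
have : (absz M)%:Z <= \sum_i d i.
  apply: le_trans h2; rewrite lez_nat; apply: leq_trans hK hl1.
rewrite hsd abszE; have := ler_norm (- M); rewrite normrN.
lia.
Qed.
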